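(* Let $M=\mathrm{Mon}\langle \Sigma \mid R\rangle$ be a finitely presented monoid and let $\mathfrak{R}$ be a rewriting system for $M$ that is complete and cyclically complete. Let $u,v\in\Sigma^*$. If $u=_M v$, then $\rho(u)\simeq\rho(v)$.
   Context: $\Sigma^*$ is the free monoid on the alphabet $\Sigma$; $=_M$ is equality in $M$. A rewriting system $\mathfrak{R}$ is a set of rules $l\to r$ with $l,r\in\Sigma^*$; $plq\to prq$ is one rewriting step. $\mathfrak{R}$ is complete for $M$ if it is terminating, confluent, and the congruence it generates on $\Sigma^*$ is $=_M$. $u\simeq v$ means $u=ab$, $v=ba$ for some words $a,b$ (cyclic conjugates in $\Sigma^*$). $u\rightsquigarrow v$ means some cyclic conjugate $\tilde u$ of $u$ (possibly $u$) satisfies $\tilde u\to v$; $\rightsquigarrow^*$ is its reflexive–transitive closure. $\mathfrak{R}$ is cyclically terminating if there is no infinite sequence $u_1\rightsquigarrow u_2\rightsquigarrow\cdots$; cyclically confluent if whenever $w\rightsquigarrow^* u$ and $w\rightsquigarrow^* v$ there exist $z\simeq z'$ with $u\rightsquigarrow^* z$ and $v\rightsquigarrow^* z'$; cyclically complete if both. A word is cyclically irreducible if it and all its cyclic conjugates are irreducible modulo $\mathfrak{R}$. $\rho(u)$ denotes a cyclically irreducible form of $u$, i.e. a cyclically irreducible word $w$ with $u\rightsquigarrow^* w$; when $\mathfrak{R}$ is cyclically complete, every word has such a form, unique up to $\simeq$. *)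

(* Defs.v *)
From mathcomp Require Import all_boot.
From Stdlib Require Import Relations.
Set Implicit Arguments. Unset Strict Implicit. Unset Printing Implicit Defensive.

Section Rewriting.
Variable Sigma : finType.
Notation word := (seq Sigma).

Definition rstep (rs : word -> word -> Prop) (u v : word) : Prop :=
  exists p q l r, rs l r /\ u = p ++ l ++ q /\ v = p ++ r ++ q.

Definition rel_rules (R : seq (word * word)) (l r : word) : Prop := (l, r) \in R.

(* equality in M = Mon<Sigma | R>: the congruence on Sigma^* generated by R *)
Definition eqM (R : seq (word * word)) (u v : word) : Prop :=
  clos_refl_sym_trans word (rstep (rel_rules R)) u v.

Definition terminating (rs : word -> word -> Prop) : Prop :=
  ~ exists f : nat -> word, forall n, rstep rs (f n) (f n.+1).

Definition rstar (rs : word -> word -> Prop) := clos_refl_trans word (rstep rs).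

Definition confluent (rs : word -> word -> Prop) : Prop :=
  forall w u v, rstar rs w u -> rstar rs w v ->
    exists z, rstar rs u z /\ rstar rs v z.

Definition complete_for (R : seq (word * word)) (rs : word -> word -> Prop) : Prop :=
  [/\ terminating rs, confluent rs &
      forall u v, clos_refl_sym_trans word (rstep rs) u v <-> eqM R u v].

Definition cconj (u v : word) : Prop := exists a b, u = a ++ b /\ v = b ++ a.

Definition cstep (rs : word -> word -> Prop) (u v : word) : Prop :=
  exists u', cconj u u' /\ rstep rs u' v.

Definition cstar (rs : word -> word -> Prop) := clos_refl_trans word (cstep rs).

Definition cyc_terminating (rs : word -> word -> Prop) : Prop :=
  ~ exists f : nat -> word, forall n, cstep rs (f n) (f n.+1).

Definition cyc_confluent (rs : word -> word -> Prop) : Prop :=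
  forall w u v, cstar rs w u -> cstar rs w v ->
    exists z z', [/\ cconj z z', cstar rs u z & cstar rs v z'].

Definition cyc_complete (rs : word -> word -> Prop) : Prop :=
  cyc_terminating rs /\ cyc_confluent rs.

Definition irreducible (rs : word -> word -> Prop) (w : word) : Prop :=
  ~ exists v, rstep rs w v.

Definition cyc_irreducible (rs : word -> word -> Prop) (w : word) : Prop :=
  forall w', cconj w w' -> irreducible rs w'.

Definition is_rho (rs : word -> word -> Prop) (u w : word) : Prop :=
  cyc_irreducible rs w /\ cstar rs u w.

End Rewriting.

(* Main.v *)
Require Import Defs.
From mathcomp Require Import all_boot.
From Stdlib Require Import Relations.

Section Aux.
Variable Sigma : finType.
Notation word := (seq Sigma).

Lemma cconj_rot (u v : word) : cconj u v <-> exists k, k <= size u /\ v = rot k u.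
Proof.
split.
- move=> [a [b [-> ->]]]; exists (size a); split; first by rewrite size_cat leq_addr.
  by rewrite rot_size_cat.
- move=> [k [Hk ->]]; exists (take k u), (drop k u); split; first by rewrite cat_take_drop.
  by [].
Qed.

Lemma cconj_sym (u v : word) : cconj u v -> cconj v u.
Proof. by move=> [a [b [-> ->]]]; exists b, a. Qed.

Lemma cconj_trans (u v w : word) : cconj u v -> cconj v w -> cconj u w.
Proof.
move=> /cconj_rot [k [Hk ->]] /cconj_rot [m [Hm ->]].
apply/cconj_rot; rewrite size_rot in Hm.
rewrite rot_add_mod //.
case: ifP => H; eexists; (split; last reflexivity) => //.
by rewrite leq_subLR leq_add.
Qed.

Lemma cyc_irr_conj rs (w w' : word) :
  cyc_irreducible rs w -> cconj w w' -> cyc_irreducible rs w'.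
Proof. move=> H Hc w'' Hc'; apply: H; exact: cconj_trans Hc Hc'. Qed.

Lemma cyc_irr_stuck rs (w z : word) :
  cyc_irreducible rs w -> cstar rs w z -> z = w.
Proof.
move=> Hi /clos_rt_rt1n_iff H; case: H => [//|y z0 [w' [Hc Hs]] _].
by exfalso; apply: (Hi w' Hc); exists y.
Qed.

Lemma rstar_cstar rs (u v : word) : rstar rs u v -> cstar rs u v.
Proof.
elim => [x y Hs| x | x y z _ IH1 _ IH2].
- apply: rt_step; exists x; split => //; exists x, [::]; by rewrite cats0.
- exact: rt_refl.
- exact: rt_trans IH1 IH2.
Qed.

Lemma church_rosser rs (u v : word) : confluent rs ->
  clos_refl_sym_trans word (rstep rs) u v ->
  exists z, rstar rs u z /\ rstar rs v z.
Proof.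
move=> Hc; elim => [x y Hs | x | x y _ [z [H1 H2]] | x y z _ [a [H1 H2]] _ [b [H3 H4]]].
- by exists y; split; [apply: rt_step | apply: rt_refl].
- by exists x; split; apply: rt_refl.
- by exists z.
- have [c [H5 H6]] := Hc _ _ _ H2 H3.
  exists c; split; [exact: rt_trans H1 H5 | exact: rt_trans H4 H6].
Qed.

End Aux.

Theorem lemma3p2 (Sigma : finType) (R : seq (seq Sigma * seq Sigma))
  (rs : seq Sigma -> seq Sigma -> Prop) :
  complete_for R rs -> cyc_complete rs ->
  forall u v : seq Sigma, eqM R u v ->
  forall ru rv : seq Sigma, is_rho rs u ru -> is_rho rs v rv ->
  cconj ru rv.
Proof.
move=> [_ Hconf Heq] [_ Hcc] u v Huv ru rv [Iu Su] [Iv Sv].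
have [n [Hun Hvn]] := @church_rosser Sigma rs u v Hconf (proj2 (Heq u v) Huv).
have [z [z' [Czz' Sz Sz']]] := Hcc _ _ _ Su (@rstar_cstar Sigma rs _ _ Hun).
have Ez := @cyc_irr_stuck Sigma rs _ _ Iu Sz; subst z.
have [y [y' [Cyy' Sy Sy']]] := Hcc _ _ _ Sv (@rstar_cstar Sigma rs _ _ Hvn).
have Ey := @cyc_irr_stuck Sigma rs _ _ Iv Sy; subst y.
have I1 := @cyc_irr_conj Sigma rs _ _ Iu Czz'.
have I2 := @cyc_irr_conj Sigma rs _ _ Iv Cyy'.
have [a [b [Cab Sa Sb]]] := Hcc _ _ _ Sz' Sy'.
have Ea := @cyc_irr_stuck Sigma rs _ _ I1 Sa; subst a.
have Eb := @cyc_irr_stuck Sigma rs _ _ I2 Sb; subst b.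
apply: cconj_trans Czz' _; apply: cconj_trans Cab _; exact: cconj_sym.
Qed.
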